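(* Let $(X,P,o)$ be a generalized parametric metric space such that $P$ satisfies (P5) and $o$ is continuous. Then $(X,\tau_P)$ is first countable; more precisely, for each $x\in X$ the family $\{B(x,\tfrac1n,\tfrac1n): n\in\mathbb{N}\}$ is a local base at $x$.
   Context: A binary operation $o:[0,\infty)\times[0,\infty)\to[0,\infty)$ (written $\alpha\, o\, \beta$) is assumed to satisfy, for all $\alpha,\beta,\gamma\in[0,\infty)$: (a) $\alpha\, o\, 0=\alpha$; (b) $\alpha\le\beta\implies \alpha\, o\,\gamma\le\beta\, o\,\gamma$; (c) $\alpha\, o\,\gamma=\gamma\, o\,\alpha$; (d) $\alpha\, o\,(\beta\, o\,\gamma)=(\alpha\, o\,\beta)\, o\,\gamma$. It is continuous if whenever $\alpha_n\to\alpha$ and $\beta_n\to\beta$ in $[0,\infty)$ we have $\alpha_n\, o\,\beta_n\to\alpha\, o\,\beta$. A generalized parametric metric on a nonempty set $X$ is a function $P:X\times X\times(0,\infty)\to[0,\infty)$ such that: (P1) $P(a,b,t)=0$ for all $t>0$ if and only if $a=b$; (P2) $P(a,b,t)=P(b,a,t)$ for all $a,b\in X$, $t>0$; (P3) $P(a,b,s+t)\le P(a,x,s)\, o\, P(b,x,t)$ for all $s,t>0$ and $a,b,x\in X$. The triple $(X,P,o)$ is a generalized parametric metric space. Condition (P5): for all $a,b\in X$, the map $t\mapsto P(a,b,t)$ is continuous on $(0,\infty)$. Open ball: $B(a,\alpha,t)=\{b\in X: P(a,b,t)<\alpha\}$. $\tau_P$ is the topology consisting of all $A\subseteq X$ such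 that for every $a\in A$ there exist $\alpha>0,t>0$ with $B(a,\alpha,t)\subseteq A$. *)

(* Defs.v *)
From Stdlib Require Import Reals.
Open Scope R_scope.

(* The binary operation o : [0,oo) x [0,oo) -> [0,oo), represented as a
   function R -> R -> R whose axioms are only imposed on [0,oo). *)
Definition is_binop (o : R -> R -> R) : Prop :=
  (forall a b, 0 <= a -> 0 <= b -> 0 <= o a b) /\
  (forall a, 0 <= a -> o a 0 = a) /\
  (forall a b c, 0 <= a -> 0 <= b -> 0 <= c -> a <= b -> o a c <= o b c) /\
  (forall a c, 0 <= a -> 0 <= c -> o a c = o c a) /\
  (forall a b c, 0 <= a -> 0 <= b -> 0 <= c -> o a (o b c) = o (o a b) c).

Definition binop_continuous (o : R -> R -> R) : Prop :=
  forall (an bn : nat -> R) (a b : R),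
    (forall n, 0 <= an n) -> (forall n, 0 <= bn n) -> 0 <= a -> 0 <= b ->
    Un_cv an a -> Un_cv bn b -> Un_cv (fun n => o (an n) (bn n)) (o a b).

(* Generalized parametric metric P : X x X x (0,oo) -> [0,oo); the values of
   P at parameters t <= 0 are irrelevant. *)
Definition is_gen_param_metric {X : Type} (P : X -> X -> R -> R)
  (o : R -> R -> R) : Prop :=
  (forall a b t, 0 < t -> 0 <= P a b t) /\
  (forall a b, (forall t, 0 < t -> P a b t = 0) <-> a = b) /\
  (forall a b t, 0 < t -> P a b t = P b a t) /\
  (forall a b x s t, 0 < s -> 0 < t -> P a b (s + t) <= o (P a x s) (P b x t)).

Definition P5 {X : Type} (P : X -> X -> R -> R) : Prop :=
  forall a b t, 0 < t -> continuity_pt (P a b) t.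

Definition oball {X : Type} (P : X -> X -> R -> R) (a : X) (alpha t : R)
  : X -> Prop := fun b => P a b t < alpha.

Definition tauP_open {X : Type} (P : X -> X -> R -> R) (A : X -> Prop) : Prop :=
  forall a, A a -> exists alpha t, 0 < alpha /\ 0 < t /\
    (forall b, oball P a alpha t b -> A b).

Definition local_base {X : Type} (P : X -> X -> R -> R) (x : X)
  (F : nat -> X -> Prop) : Prop :=
  (forall n, tauP_open P (F n) /\ F n x) /\
  (forall U, tauP_open P U -> U x -> exists n, forall b, F n b -> U b).

Definition first_countable {X : Type} (P : X -> X -> R -> R) : Prop :=
  forall x, exists F : nat -> X -> Prop, local_base P x F.

(* Main.v *)
Require Import Defs.
From Stdlib Require Import Reals Lra Lia ZArith.
Open Scope R_scope.

Lemma small_inv (m : R) : 0 < m -> exists N, forall n, (N <= n)%nat -> / INR (S n) < m.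
Proof.
  intros Hm. destruct (archimed (/ m)) as [H _].
  assert (Hp : 0 < / m) by (apply Rinv_0_lt_compat; lra).
  assert (Hz : (0 < up (/ m))%Z) by (apply lt_0_IZR; lra).
  exists (Z.to_nat (up (/ m))). intros n Hn.
  assert (HN : INR (Z.to_nat (up (/m))) = IZR (up (/m))).
  { rewrite INR_IZR_INZ. rewrite Z2Nat.id; lia || reflexivity. }
  assert (HS : INR (Z.to_nat (up (/m))) < INR (S n)) by (apply lt_INR; lia).
  rewrite <- (Rinv_inv m).
  apply Rinv_lt_contravar.
  - apply Rmult_lt_0_compat; lra.
  - lra.
Qed.

Lemma inv_cv : Un_cv (fun n => / INR (S n)) 0.
Proof.
  intros eps He. destruct (small_inv eps He) as [N HN]. exists N. intros n Hn.
  unfold R_dist. rewrite Rminus_0_r. rewrite Rabs_pos_eq.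
  - apply HN; lia.
  - left; apply Rinv_0_lt_compat, lt_0_INR; lia.
Qed.

Lemma const_cv (b : R) : Un_cv (fun _ => b) b.
Proof. intros eps He. exists O. intros. unfold R_dist. rewrite Rminus_diag, Rabs_R0. lra. Qed.

Section S.
Variables (X : Type) (P : X -> X -> R -> R) (o : R -> R -> R).
Hypotheses (Ho : is_binop o) (HP : is_gen_param_metric P o).

Lemma Pmono a b s t : 0 < s -> s <= t -> P a b t <= P a b s.
Proof.
  intros Hs Hst. destruct Ho as (o0 & o1 & o2 & o3 & o4).
  destruct HP as (p0 & p1 & p2 & p3).
  destruct (Req_dec s t) as [<-|Hne]; [lra|].
  replace t with (s + (t - s)) by ring.
  eapply Rle_trans. apply (p3 a b b s (t - s)); lra.
  assert (P b b (t - s) = 0) as ->. { apply (proj2 (p1 b b)); auto; lra. }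
  rewrite o1; [lra|]. apply p0; lra.
Qed.
End S.

Theorem mainTheorem12 (X : Type) (P : X -> X -> R -> R) (o : R -> R -> R) :
  is_binop o -> is_gen_param_metric P o -> P5 P -> binop_continuous o ->
  first_countable P /\
  (forall x : X,
     local_base P x (fun n => oball P x (/ INR (S n)) (/ INR (S n)))).
Proof.
  intros Ho HP H5 Hc.
  assert (Main : forall x : X,
     local_base P x (fun n => oball P x (/ INR (S n)) (/ INR (S n)))).
  { intros x.
    pose proof Ho as (o0 & o1 & o2 & o3 & o4).
    pose proof HP as (p0 & p1 & p2 & p3).
    split.
    - intros n. set (t := / INR (S n)).
      assert (Ht : 0 < t) by (apply Rinv_0_lt_compat, lt_0_INR; lia).
      split.
      + intros b Hb. unfold oball in Hb.
        destruct (H5 x b t Ht (t - P x b t) ltac:(lra)) as [alp [Halp Hal]].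
        set (s := Rmin (alp/2) (t/2)).
        assert (Hs0 : 0 < s) by (unfold s; apply Rmin_glb_lt; lra).
        assert (Hs1 : s <= alp/2) by apply Rmin_l.
        assert (Hs2 : s <= t/2) by apply Rmin_r.
        assert (Hbeta : P x b (t - s) < t).
        { assert (Hd := Hal (t - s)). simpl in Hd. unfold R_dist in Hd.
          assert (Hd' : Rabs (P x b (t - s) - P x b t) < t - P x b t).
          { apply Hd. split. split. exact I. lra.
            rewrite Rabs_left; lra. }
          apply Rabs_def2 in Hd'. lra. }
        set (beta := P x b (t - s)) in *.
        assert (Hb0 : 0 <= beta) by (apply p0; lra).
        assert (Hcv := Hc (fun _ => beta) (fun n => / INR (S n)) beta 0
                  (fun _ => Hb0)
                  (fun n => Rlt_le _ _ (Rinv_0_lt_compat _ (lt_0_INR _ (Nat.lt_0_succ n))))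
                  Hb0 (Rle_refl 0) (const_cv beta) inv_cv).
        rewrite o1 in Hcv by exact Hb0.
        destruct (Hcv (t - beta) ltac:(lra)) as [N HN].
        specialize (HN N (le_n N)). unfold R_dist in HN.
        apply Rabs_def2 in HN.
        set (g := / INR (S N)) in *.
        assert (Hg : 0 < g) by (apply Rinv_0_lt_compat, lt_0_INR; lia).
        exists g, s. split; [exact Hg|]. split; [exact Hs0|].
        intros c Hcb. unfold oball in *.
        replace t with ((t - s) + s) by ring.
        eapply Rle_lt_trans. apply (p3 x c b (t - s) s); lra.
        fold beta. rewrite (p2 c b s Hs0).
        assert (0 <= P b c s) by (apply p0; lra).
        rewrite (o3 beta) by lra.
        eapply Rle_lt_trans. apply (o2 _ g); lra.
        rewrite <- (o3 beta g) by lra.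
        replace (t - s + s) with t by ring. lra.
      + unfold oball. assert (P x x t = 0) as -> by (apply (proj2 (p1 x x)); auto). lra.
    - intros U HU Ux. destruct (HU x Ux) as (al & t & Hal & Ht & Hb).
      destruct (small_inv (Rmin al t) ltac:(apply Rmin_glb_lt; lra)) as [N HN].
      exists N. intros b Hb'. apply Hb. unfold oball in *.
      specialize (HN N (le_n N)).
      assert (Hm1 := Rmin_l al t). assert (Hm2 := Rmin_r al t).
      assert (0 < / INR (S N)) by (apply Rinv_0_lt_compat, lt_0_INR; lia).
      eapply Rle_lt_trans. apply (Pmono X P o Ho HP x b (/ INR (S N)) t); lra.
      lra. }
  split; [|exact Main].
  intros x. eexists. apply Main.
Qed.
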